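(* Let $1\le k<n$, let $P,Q\in\mathbb{M}_n$ be rank-$k$ orthogonal projections and $\theta_1,\theta_2\in\mathbb{R}$. Then $\operatorname{span}_{\mathbb{R}}e^{i\theta_1}S(P)=\operatorname{span}_{\mathbb{R}}e^{i\theta_2}S(Q)$ if and only if $P=Q$ and $\theta_1\equiv\theta_2\pmod{\pi}$.
   Context: For $A\in\mathbb{M}_n$: $w_k(A)=\max\{|\operatorname{tr}(AP)|: P=P^*=P^2,\operatorname{tr}P=k\}$. For a rank-$k$ orthogonal projection $P$, $S(P)=\{B\in\mathbb{M}_n:\operatorname{tr}(BP)=w_k(B)\}$. *)

(* Defs.v *)
From HB Require Import structures.
From mathcomp Require Import all_boot all_order all_algebra.
From mathcomp Require Import complex.
From mathcomp Require Import reals trigo.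
Set Implicit Arguments. Unset Strict Implicit. Unset Printing Implicit Defensive.
Import Order.TTheory GRing.Theory Num.Theory.
Local Open Scope ring_scope.
Local Open Scope complex_scope.

Definition adjmx (R : rcfType) (n : nat) (A : 'M[R[i]]_n) : 'M[R[i]]_n :=
  (map_mx (@conjc R) A)^T.

Definition is_proj_rank (R : rcfType) (n k : nat) (P : 'M[R[i]]_n) : Prop :=
  adjmx P = P /\ P *m P = P /\ \tr P = k%:R.

Definition is_wk (R : rcfType) (n k : nat) (A : 'M[R[i]]_n) (w : R[i]) : Prop :=
  (exists P : 'M[R[i]]_n, is_proj_rank k P /\ `|\tr (A *m P)| = w) /\
  (forall P : 'M[R[i]]_n, is_proj_rank k P -> `|\tr (A *m P)| <= w).

Definition Sset (R : rcfType) (n k : nat) (P : 'M[R[i]]_n) : 'M[R[i]]_n -> Prop :=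
  fun B => is_wk k B (\tr (B *m P)).

Definition scale_set (R : rcfType) (n : nat) (c : R[i]) (S : 'M[R[i]]_n -> Prop)
  : 'M[R[i]]_n -> Prop := fun X => exists2 B, S B & X = c *: B.

Definition spanR (R : rcfType) (n : nat) (S : 'M[R[i]]_n -> Prop)
  : 'M[R[i]]_n -> Prop :=
  fun X => exists (m : nat) (c : 'I_m -> R) (Bs : 'I_m -> 'M[R[i]]_n),
    (forall j, S (Bs j)) /\ X = \sum_(j < m) ((c j)%:C) *: Bs j.

Definition expi (R : realType) (t : R) : R[i] := (cos t +i* sin t).

(* Main.v *)
Require Import Defs.
From HB Require Import structures.
From mathcomp Require Import all_boot all_order all_algebra.
From mathcomp Require Import complex.
From mathcomp Require Import boolp reals trigo.
From mathcomp Require Import lra ring.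
Import Order.TTheory GRing.Theory Num.Theory.
Local Open Scope ring_scope.
Local Open Scope complex_scope.
Set Implicit Arguments. Unset Strict Implicit.

Section Mx.
Variable R : rcfType.
Local Notation C := (R[i]).

Lemma adjmxM n (A B : 'M[C]_n) : adjmx (A *m B) = adjmx B *m adjmx A.
Proof. by rewrite /adjmx map_mxM trmx_mul. Qed.

Lemma adjmxB n (A B : 'M[C]_n) : adjmx (A - B) = adjmx A - adjmx B.
Proof. by rewrite /adjmx map_mxB linearB. Qed.

Lemma adjmx1 n : adjmx (1 : 'M[C]_n) = 1.
Proof. by rewrite /adjmx map_mx1 trmx1. Qed.

Lemma tr_adj n (A : 'M[C]_n) :
  \tr (A *m adjmx A) = \sum_i \sum_j A i j * (A i j)^*.
Proof.
rewrite /mxtrace; apply: eq_bigr => i _; rewrite !mxE; apply: eq_bigr => j _.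
by rewrite !mxE.
Qed.

Lemma tr_adj_ge0 n (A : 'M[C]_n) : 0 <= \tr (A *m adjmx A).
Proof.
rewrite tr_adj; apply: sumr_ge0 => i _; apply: sumr_ge0 => j _.
exact: mulcJ_ge0.
Qed.

Lemma tr_adj_eq0 n (A : 'M[C]_n) : \tr (A *m adjmx A) = 0 -> A = 0.
Proof.
rewrite tr_adj => H0; apply/matrixP => i j; rewrite mxE.
have H1 := psumr_eq0P (fun i _ => sumr_ge0 _ (fun j _ => mulcJ_ge0 (A i j))) H0.
have H2 := psumr_eq0P (fun j _ => mulcJ_ge0 (A i j)) (H1 i isT) (i := j) isT.
by move: H2 => /eqP; rewrite mulf_eq0 conjc_eq0 orbb => /eqP.
Qed.

Definition hp n (P : 'M[C]_n) := adjmx P = P /\ P *m P = P.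

Lemma hpC n (P : 'M[C]_n) : hp P -> hp (1 - P).
Proof.
case=> h1 h2; split; first by rewrite adjmxB adjmx1 h1.
by rewrite mulmxBl !mulmxBr h2 !mulmxE !mulr1 !mul1r subrr subr0.
Qed.

Lemma tr_proj_ge0 n (P Q : 'M[C]_n) : hp P -> hp Q -> 0 <= \tr (P *m Q).
Proof.
case=> p1 p2 [q1 q2].
have -> : \tr (P *m Q) = \tr ((P *m Q) *m adjmx (P *m Q)).
  rewrite adjmxM p1 q1 -mulmxA (mulmxA Q) q2.
  by rewrite [RHS]mxtrace_mulC -mulmxA p2 mxtrace_mulC.
exact: tr_adj_ge0.
Qed.

Lemma proj_eq n k (P Q : 'M[C]_n) : hp P -> hp Q -> \tr P = k%:R -> \tr Q = k%:R ->
  \tr (P *m Q) = k%:R -> P = Q.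
Proof.
case=> p1 p2 [q1 q2] tP tQ tPQ.
apply/eqP; rewrite -subr_eq0; apply/eqP; apply: tr_adj_eq0.
rewrite adjmxB p1 q1 mulmxBl !mulmxBr p2 q2 !linearB /=.
rewrite [\tr (Q *m P)]mxtrace_mulC tPQ tP tQ.
by rewrite !subrr addr0.
Qed.
Lemma real_eqC (a : C) : a \is Num.real -> a = (complex.Re a)%:C.
Proof. by move/RRe_real. Qed.

Lemma key_bound (a : C) (k : nat) : 0 <= a -> 0 <= k%:R - a ->
  `|a + 'i * (k%:R - a)| <= k%:R.
Proof.
move=> ha hka.
have hre := ger0_real ha; rewrite (real_eqC hre) in ha hka *; clear hre.
move: (complex.Re a) hka ha => r; rewrite -(rmorph_nat (real_complex R)) -rmorphB /=.
rewrite !ler0c => hkr hr.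
have -> : r%:C + 'i * (k%:R - r)%:C = r +i* (k%:R - r).
  by rewrite /= ; simpc.
rewrite normc_def /= lecR -[X in _ <= X]ger0_norm ?ler0n // -sqrtr_sqr.
rewrite ler_sqrt ?exprn_ge0 ?ler0n //.
nra.
Qed.
Lemma span_real n k (Q : 'M[C]_n) (e : C) X :
  spanR (scale_set e (Sset k Q)) X -> (e^* * \tr (X *m Q)) \is Num.real.
Proof.
case=> m [c [Bs [HB ->]]].
rewrite mulmx_suml raddf_sum /= mulr_sumr; apply: rpred_sum => j _.
case: (HB j) => B HBs ->.
rewrite -!scalemxAl !mxtraceZ.
have -> : e^* * ((c j)%:C * (e * \tr (B *m Q))) = (c j)%:C * ((e * e^*) * \tr (B *m Q)).
  ring.
apply: rpredM; first by apply/complex_realP; exists (c j).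
apply: rpredM; first exact: ger0_real (mulcJ_ge0 e).
case: HBs => [[P0 [_ <-]] _]; exact: normr_real.
Qed.

Lemma S_one n k (P : 'M[C]_n) : is_proj_rank k P -> Sset k P 1.
Proof.
move=> hP; have [_ [_ tP]] := hP.
rewrite /Sset /is_wk mul1mx tP; split.
  by exists P; split => //; rewrite mul1mx tP ger0_norm ?ler0n.
by move=> Q [_ [_ tQ]]; rewrite mul1mx tQ ger0_norm ?ler0n.
Qed.

Lemma trB n (P Q : 'M[C]_n) :
  \tr ((P + 'i *: (1 - P)) *m Q) = \tr (P *m Q) + 'i * (\tr Q - \tr (P *m Q)).
Proof. by rewrite mulmxDl -scalemxAl mulmxBl mul1mx mxtraceD mxtraceZ linearB. Qed.

Lemma trC n (P Q : 'M[C]_n) : \tr ((1 - P) *m Q) = \tr Q - \tr (P *m Q).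
Proof. by rewrite mulmxBl mul1mx linearB. Qed.

Lemma S_B n k (P : 'M[C]_n) : is_proj_rank k P -> Sset k P (P + 'i *: (1 - P)).
Proof.
move=> hP; have [p1 [p2 tP]] := hP.
have hv : \tr ((P + 'i *: (1 - P)) *m P) = k%:R.
  by rewrite trB p2 tP subrr mulr0 addr0.
rewrite /Sset /is_wk hv; split.
  by exists P; split => //; rewrite hv ger0_norm ?ler0n.
move=> Q [q1 [q2 tQ]]; rewrite trB tQ.
apply: key_bound; first exact: tr_proj_ge0.
rewrite -tQ -trC; apply: tr_proj_ge0 => //; exact: hpC.
Qed.

End Mx.
Section Trig.
Variable R : realType.

Lemma sin_shift (x : R) (z : int) : sin x = 0 -> sin (x + z%:~R * pi) = 0.
Proof.
move=> h; case: z => m.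
  have -> : (Posz m)%:~R * pi = pi *+ m :> R by rewrite mulrC mulrzr.
  by rewrite (alternatingn (@sinDpi R)) h mulr0.
have -> : (Negz m)%:~R * pi = - (pi *+ m.+1) :> R by rewrite mulrC mulrzr.
have := alternatingn (@sinDpi R) m.+1 (x - pi *+ m.+1).
rewrite subrK h => /esym/eqP; rewrite mulf_eq0 expf_eq0 oppr_eq0 oner_eq0 andbF /=.
by move/eqP.
Qed.

Lemma sin_eq0 (x : R) : sin x = 0 -> exists z : int, x = z%:~R * pi.
Proof.
move=> h; set z := Num.floor (x / pi); exists z.
have hy := sin_shift (- z) h.
have e1 : (- z)%:~R * pi = - (z%:~R * pi) :> R by rewrite rmorphN mulNr.
rewrite e1 in hy.
have pi0 := @pi_gt0 R.
have f1 : z%:~R * pi <= x.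
  by rewrite -ler_pdivlMr // floor_le.
have f2 : x < z%:~R * pi + pi.
  have := floorD1_gt (x / pi); rewrite -/z intrD /= ltr_pdivrMr //.
  by rewrite mulrDl mul1r.
move: f1; rewrite le_eqVlt => /orP [/eqP -> // | f1].
have : 0 < sin (x - z%:~R * pi) by apply: sin_gt0_pi; apply/andP; split; lra.
by rewrite hy ltxx.
Qed.

Lemma expi_conj_mul (t1 t2 : R) :
  (expi t2)^* * expi t1 = (cos (t1 - t2)) +i* (sin (t1 - t2)).
Proof.
rewrite /expi; simpc; rewrite cosB sinB.
by congr (_ +i* _); ring.
Qed.

Lemma expi_neq0 (t : R) : expi t != 0.
Proof.
apply/eqP; rewrite /expi => -[hc hs].
by have := cos2Dsin2 t; rewrite hc hs expr0n /= addr0 => /eqP; rewrite eq_sym oner_eq0.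
Qed.

Lemma expi_shift (t1 t2 : R) (z : int) : t1 - t2 = z%:~R * pi ->
  expi t1 = (cos (z%:~R * pi))%:C * expi t2.
Proof.
move=> h; have -> : t1 = t2 + z%:~R * pi by rewrite -h addrC subrK.
have s0 : sin (z%:~R * pi) = 0 :> R by have := sin_shift z (@sin0 R); rewrite add0r.
rewrite /expi cosD sinD s0; simpc.
by congr (_ +i* _); ring.
Qed.

End Trig.

Section Span.
Variable R : rcfType.
Local Notation C := (R[i]).

Lemma span_sub n (S : 'M[C]_n -> Prop) (c : R) (e : C) X :
  c * c = 1 -> spanR (scale_set (c%:C * e) S) X -> spanR (scale_set e S) X.
Proof.
move=> cc [m [cs [Bs [HB ->]]]].
exists m, (fun j => cs j * c), (fun j => c%:C *: Bs j); split.
  move=> j; case: (HB j) => B HBs ->; exists B => //.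
  by rewrite scalerA mulrA -rmorphM cc rmorph1 mul1r.
apply: eq_bigr => j _.
by rewrite scalerA rmorphM -mulrA -rmorphM cc rmorph1 mulr1.
Qed.

Lemma span_scale n (S : 'M[C]_n -> Prop) (c : R) (e : C) :
  c * c = 1 -> spanR (scale_set (c%:C * e) S) = spanR (scale_set e S).
Proof.
move=> cc; apply: funext => X; apply: propext; split; first exact: span_sub.
move=> h; apply: (span_sub (c := c)) => //.
by rewrite mulrA -rmorphM cc rmorph1 mul1r.
Qed.

End Span.

Theorem mainTheorem4 (R : realType) (n k : nat) (P Q : 'M[R[i]]_n)
    (t1 t2 : R) :
  (1 <= k)%N -> (k < n)%N ->
  is_proj_rank k P -> is_proj_rank k Q ->
  ((spanR (scale_set (expi t1) (Sset k P)) = spanR (scale_set (expi t2) (Sset k Q)))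
   <-> (P = Q /\ exists z : int, t1 - t2 = z%:~R * pi)).
Proof.
move=> hk1 hkn hP hQ; split.
- move=> Heq.
  have key : forall B, Sset k P B ->
      ((expi t2)^* * \tr ((expi t1 *: B) *m Q)) \is Num.real.
    move=> B HB; apply: (span_real (k:=k)); rewrite -Heq.
    exists 1%N, (fun _ => 1), (fun _ => expi t1 *: B); split.
      by move=> j; exists B.
    by rewrite big_ord1 rmorph1 scale1r.
  set w := (expi t2)^* * expi t1.
  have hw : forall B, Sset k P B -> w * \tr (B *m Q) \is Num.real.
    by move=> B /key; rewrite -scalemxAl mxtraceZ mulrA.
  have [p1 [p2 tP]] := hP; have [q1 [q2 tQ]] := hQ.
  have k0 : (k%:R : R[i]) != 0 by rewrite pnatr_eq0 -lt0n.
  have wr : w \is Num.real.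
    have := hw 1 (S_one hP); rewrite mul1mx tQ => h.
    have -> : w = w * k%:R / k%:R by rewrite mulfK.
    by apply: rpredM => //; rewrite realV realn.
  have wE : w = cos (t1 - t2) +i* sin (t1 - t2) := expi_conj_mul t1 t2.
  have s0 : sin (t1 - t2) = 0 by move: wr; rewrite wE complex_real => /eqP.
  have w0 : w != 0 by rewrite mulf_neq0 ?conjc_eq0 ?expi_neq0.
  split; last exact: sin_eq0.
  have h2 := hw _ (S_B hP); rewrite trB tQ in h2.
  have h3 : \tr (P *m Q) + 'i * (k%:R - \tr (P *m Q)) \is Num.real.
    rewrite -(mulKf w0 (\tr (P *m Q) + _)).
    by apply: rpredM => //; rewrite realV.
  have a0 : 0 <= \tr (P *m Q) by apply: tr_proj_ge0.
  apply: (proj_eq (k:=k)) => //.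
  move: h3; rewrite (real_eqC (ger0_real a0)).
  move: (complex.Re _) => r.
  rewrite -(rmorph_nat (real_complex R)) -rmorphB /=.
  have -> : r%:C + 'i * (k%:R - r)%:C = r +i* (k%:R - r).
    by rewrite /= ; simpc.
  rewrite complex_real subr_eq0 => /eqP <-.
  by rewrite rmorph_nat.
- case=> <- [z hz].
  rewrite (expi_shift hz) span_scale //.
  have := @cos2Dsin2 R (z%:~R * pi).
  have s0 : sin (z%:~R * pi) = 0 :> R by have := sin_shift z (@sin0 R); rewrite add0r.
  by rewrite s0 expr0n /= addr0 expr2.
Qed.
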